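(* Let $S$ be as in the context, $1\le k<n$, and let $\phi\in\mathcal{T}_k(S)$ with $y=l(\phi)$. Then the following are equivalent: (i) $\phi$ has a unique Weiner link $(\phi,\varphi,c)$ and $\varphi$ has no siblings in $\mathcal{T}(S)$; (ii) $y$ has exactly one predecessor $x$ in $G_k(S)$, and $y$ is the only successor of $x$ in $G_k(S)$. Moreover, in this case $x=l(\psi)$ where $\psi$ is the parent of $\varphi$ in $\mathcal{T}(S)$.
   Context: $\Sigma$ is a finite totally ordered alphabet containing a symbol $\$$ smaller than every other symbol. $S$ is a string of length $n\ge 2$ over $\Sigma$ whose last character is $\$$ and in which $\$$ occurs nowhere else; strings are indexed from $1$ and $S[i..j]$ denotes a substring. The rotations of $S$ are the $n$ strings $S[i..n]S[1..i-1]$, $i\in[1,n]$. The rotation-trie $\mathcal{T}(S)$ is the trie of the set of rotations of $S$: a rooted tree whose edges are labeled by single characters, the children of a node having distinct edge labels and being ordered from left to right by increasing edge label. The label $l(\phi)$ of a node $\phi$ is the concatenation of edge labels on the root-to-$\phi$ path, and its level is $|l(\phi)|$; leaves are the $n$ nodes at level $n$. $\mathcal{T}_k(S)$ denotes the set of nodes at level $k$. Siblings are distinct nodes with the same parent. A triple $(\phi,\varphi,c)$ with $\phi,\varphi$ nodes of $\mathcal{T}(S)$ and $c\in\Sigma$ is a Weiner link of $\phi$ if $l(\varphi)=c\,l(\phi)$, or $|l(\phi)|=n$ and $l(\varphi)=c\,l(\phi)[1..n-1]$. A Weiner link $(\phi,\varphi,c)$ is unique if there is no Weiner link $(\phi,\psi,d)$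 with $\psi\ne\varphi$. For $1\le k\le n$ let $Z_k(S)=S[1..n]S[1..k]$. The order-$k$ de Bruijn graph $G_k(S)$ is the directed multigraph whose node set is $\{Z_k(S)[i..i+k-1]: i\in[1,n]\}$ and which, for every string $z\in\Sigma^{k+1}$ occurring exactly $m\ge1$ times as a substring of $Z_k(S)$, contains the edge $(z[1..k],z[2..k+1])$ with multiplicity $m$. A node $x$ is a predecessor of $y$ (and $y$ a successor of $x$) if $G_k(S)$ contains an edge $(x,y)$ of positive multiplicity. *)

(* Defs.v *)
From HB Require Import structures.
From mathcomp Require Import all_boot all_order.
Set Implicit Arguments. Unset Strict Implicit. Unset Printing Implicit Defensive.

Section RotTrie.
Variable T : eqType.
Variable S : seq T.

Definition rotation (i : nat) : seq T := rot i S.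

(* Nodes of the rotation-trie T(S) are identified with their labels:
   a node is a prefix (possibly empty = root) of some rotation of S. *)
Definition is_node (u : seq T) : Prop :=
  exists2 i, i < size S & prefix u (rotation i).

Definition parent (u : seq T) : seq T := take (size u).-1 u.

Definition siblings (u v : seq T) : Prop :=
  is_node u /\ is_node v /\ u <> v /\ u <> [::] /\ v <> [::] /\ parent u = parent v.

Definition has_no_sibling (u : seq T) : Prop := forall v, ~ siblings u v.

Definition weiner_link (phi varphi : seq T) (c : T) : Prop :=
  is_node phi /\ is_node varphi /\
     (varphi = c :: phi \/
      (size phi = size S /\ varphi = c :: take (size S).-1 phi)).

Definition unique_weiner_link (phi varphi : seq T) (c : T) : Prop :=
  weiner_link phi varphi c /\
  (forall psi d, weiner_link phi psi d -> psi = varphi).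

Definition Zk (k : nat) : seq T := S ++ take k S.

Definition occurs (z w : seq T) : Prop :=
  exists i, i + size z <= size w /\ take (size z) (drop i w) = z.

(* Edge (x,y) with positive multiplicity in the order-k de Bruijn graph G_k(S):
   some z of length k+1 occurring in Z_k(S) with z[1..k] = x, z[2..k+1] = y. *)
Definition dB_edge (k : nat) (x y : seq T) : Prop :=
  exists z, size z = k.+1 /\ occurs z (Zk k) /\ x = take k z /\ y = behead z.

End RotTrie.

(* Main.v *)
Require Import Defs.
From HB Require Import structures.
From mathcomp Require Import all_boot all_order.
From mathcomp Require Import zify.

Lemma sub_rot (T : eqType) (S : seq T) k i : k < size S -> i < size S ->
  take k.+1 (drop i (S ++ take k S)) = take k.+1 (rot i S).
Proof.
move=> hk hi; rewrite drop_cat hi /rot !take_cat size_drop.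
case: ifP => // h.
congr (_ ++ _).
rewrite take_takel; last lia.
rewrite take_takel //; lia.
Qed.

Lemma node_occ (T : eqType) (S : seq T) k z : k < size S -> size z = k.+1 ->
  (occurs z (Zk S k) <-> is_node S z).
Proof.
move=> hk hz; split.
- case=> i []; rewrite /Zk size_cat size_take hk hz => hi hs.
  exists i; first lia.
  by rewrite prefixE hz /rotation -sub_rot ?hs //; lia.
- case=> i hi; rewrite prefixE hz /rotation => /eqP hp.
  exists i; rewrite /Zk size_cat size_take hk hz; split; first lia.
  by rewrite sub_rot.
Qed.

Lemma edge_iff (T : eqType) (S : seq T) k x y : k < size S ->
  (dB_edge S k x y <-> exists z, [/\ size z = k.+1, is_node S z, x = take k z & y = behead z]).
Proof.
move=> hk; split.
- case=> z [hz [ho [hx hy]]]; exists z; split => //; exact/(node_occ _ _ _ _ hk hz).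
- case=> z [hz ho hx hy]; exists z; split => //; split => //; exact/(node_occ _ _ _ _ hk hz).
Qed.

Lemma wl_iff (T : eqType) (S : seq T) phi psi d : size phi < size S ->
  (weiner_link S phi psi d <-> [/\ is_node S phi, is_node S psi & psi = d :: phi]).
Proof.
move=> hs; split.
- case=> h1 [h2 [h3|[h4 _]]]; [by split| lia].
- by case=> h1 h2 h3; split; [|split; [|left]].
Qed.
Theorem mainTheorem2 (disp : Order.disp_t) (Sigma : finOrderType disp)
    (dollar : Sigma) (S : seq Sigma) (n k : nat) (phi : seq Sigma) :
  (forall a : Sigma, (dollar <= a)%O) ->
  size S = n -> 2 <= n ->
  last dollar S = dollar -> dollar \notin take n.-1 S ->
  1 <= k -> k < n ->
  is_node S phi -> size phi = k ->
  let y := phi in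
  ((exists varphi c,
      unique_weiner_link S phi varphi c /\ has_no_sibling S varphi)
   <->
   (exists x,
      [/\ dB_edge S k x y,
          (forall x', dB_edge S k x' y -> x' = x) &
          (forall y', dB_edge S k x y' -> y' = y)]))
  /\
  (forall varphi c x,
      unique_weiner_link S phi varphi c -> has_no_sibling S varphi ->
      dB_edge S k x y ->
      (forall x', dB_edge S k x' y -> x' = x) ->
      (forall y', dB_edge S k x y' -> y' = y) ->
      x = parent varphi).
Proof.
move=> _ hn _ _ _ hk1 hkn hphi hsz y.
have hk : k < size S by rewrite hn.
have hps : size phi < size S by rewrite hsz hn.
case: k hk1 hkn hsz hk hps => [//|k'] _ hkn hsz hk hps.
split; last first.
  move=> varphi c x [/(wl_iff _ _ _ _ _ hps) [_ hv ev] _] _ _ Hx _; subst varphi.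
  symmetry; rewrite /parent /= hsz /=; apply: Hx; apply/(edge_iff _ _ _ _ _ hk).
  exists (c :: phi); split; rewrite //= ?hsz //.
split.
- case=> varphi [c [[/(wl_iff _ _ _ _ _ hps) [_ hv ev] Hu] Hns]].
  exists (take k'.+1 varphi); split.
  + apply/(edge_iff _ _ _ _ _ hk); exists varphi; split; rewrite //= ?ev /= ?hsz //.
  + move=> x' /(edge_iff _ _ _ _ _ hk) [z [hz hzn -> hy]].
    case: z hz hzn hy => [//|d t] _ hzn /= hy; rewrite /y in hy; subst t.
    by rewrite -(Hu (d :: phi) d) //; apply/(wl_iff _ _ _ _ _ hps).
  + move=> y' /(edge_iff _ _ _ _ _ hk) [z [hz hzn hx ->]].
    have [ez|nez] := eqVneq z varphi; first by rewrite ez ev.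
    exfalso; apply: (Hns z); rewrite /siblings; split => //; split => //.
    split; first by move=> e; rewrite e eqxx in nez.
    split; first by rewrite ev.
    split; first by case: z hz {hzn hx nez}.
    have e1 : (size varphi).-1 = k'.+1 by rewrite ev /= hsz.
    by rewrite /parent hz e1 hx.
- case=> x [/(edge_iff _ _ _ _ _ hk) [z0 [hz0 hz0n hx0 hy0]] Hx Hy].
  case: z0 hz0 hz0n hx0 hy0 => [//|d t] _ hz0n hx0 /= hy0; rewrite /y in hy0; subst t.
  exists (d :: phi), d; split.
  + split; first by apply/(wl_iff _ _ _ _ _ hps).
    move=> psi e /(wl_iff _ _ _ _ _ hps) [_ hpn ep]; subst psi.
    have : take k'.+1 (e :: phi) = x.
      apply: Hx; apply/(edge_iff _ _ _ _ _ hk); exists (e :: phi); split => //.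
      by rewrite /= hsz.
    by rewrite hx0 /= => [[->]].
  + move=> v [_ [hvn [nev [_ [nev' hp]]]]].
    have hsv : size v = k'.+2.
      have := congr1 size hp; rewrite /parent !size_take /= hsz.
      case: v {hvn nev hp} nev' => [//|a v] _ /=; rewrite !ltnSn => h; lia.
    have hxv : x = take k'.+1 v.
      have e : parent (d :: phi) = take k'.+1 (d :: phi) by rewrite /parent /= hsz.
      have e2 : parent v = take k'.+1 v by rewrite /parent hsv.
      by rewrite hx0 -e hp e2.
    have := Hy (behead v); case: v hvn nev nev' hp hsv hxv => [//|a v] hvn nev _ _ hsv hxv /= hb.
    have hb' : v = phi.
      apply: hb; apply/(edge_iff _ _ _ _ _ hk); exists (a :: v); split => //.
    move: nev hxv; rewrite hb' hx0 /= => nev [e3]; apply: nev; by rewrite e3.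
Qed.
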